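(* Let $q\ge2$, $k\ge1$, and let $\mathcal{A}$ be an automaton over $\mathrm{BS}(1,q)$. If $\rho$ is a run in $\mathsf{LeftRuns}_k(\mathcal{A})$, then $|\rho|/k<\mathsf{pmax}(\rho)+1$.
   Context: $\mathrm{BS}(1,q)$ is identified with $\mathbb{Z}[\tfrac1q]\rtimes\mathbb{Z}$ (pairs $(r,m)$ with $(r,m)(r',m')=(r+q^mr',m+m')$), with generating set $\Sigma=\{(1,0),(-1,0),(0,1),(0,-1)\}$. An automaton over $\mathrm{BS}(1,q)$ is $(Q,\Sigma,E,q_0,q_f)$ with $E\subseteq Q\times\Sigma\times Q$. A run $\rho=\rho_1\cdots\rho_\ell$ is a sequence of consecutive edges; $|\rho|=\ell$; its production $[\rho]$ is the product of its labels; it is accepting if it starts in $q_0$ and ends in $q_f$. If $[\rho]=(r,m)$, set $\mathrm{pos}(\rho)=m$; $\mathsf{pmax}(\rho)$ and $\mathsf{pmin}(\rho)$ are the maximum and minimum of $\mathrm{pos}(\pi)$ over prefixes $\pi$ of $\rho$. The run is returning-left if $\mathrm{pos}(\rho)=0$ and $\mathsf{pmin}(\rho)=0$. Its thickness is $\max_{z\in\mathbb{Z}}|\{i:\mathrm{pos}(\rho_1\cdots\rho_i)=z\}|$, and it is $k$-thin if its thickness is at most $k$. $\mathsf{LeftRuns}_k(\mathcal{A})$ is the set of accepting, $k$-thin, returning-left runs of $\mathcal{A}$. *)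

(* Defs.v *)
From mathcomp Require Import all_boot all_order all_algebra.
Set Implicit Arguments. Unset Strict Implicit. Unset Printing Implicit Defensive.
Import Order.TTheory GRing.Theory Num.Theory.
Local Open Scope ring_scope.

(* BS(1,q) = Z[1/q] ⋊ Z, represented as pairs (r, m) with r : rat, m : int.
   (Z[1/q] is a subring of Q; every product of generators lands in Z[1/q].) *)
Definition BS := (rat * int)%type.

Definition bs_mul (q : nat) (x y : BS) : BS :=
  (x.1 + (q%:Q) ^ x.2 * y.1, x.2 + y.2).

Definition bs_one : BS := (0, 0).

Inductive letter := gen_a | gen_a_inv | gen_t | gen_t_inv.

Definition letter_val (s : letter) : BS :=
  match s with
  | gen_a => (1, 0)
  | gen_a_inv => (-1, 0)
  | gen_t => (0, 1)
  | gen_t_inv => (0, -1)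
  end.

Record automaton (Q : finType) := Automaton {
  edge : Q -> letter -> Q -> bool;
  q_init : Q;
  q_final : Q }.

Definition edge_t (Q : Type) := (Q * letter * Q)%type.

Definition src (Q : Type) (e : edge_t Q) : Q := e.1.1.
Definition lbl (Q : Type) (e : edge_t Q) : letter := e.1.2.
Definition tgt (Q : Type) (e : edge_t Q) : Q := e.2.

Fixpoint consecutive (Q : eqType) (rho : seq (edge_t Q)) : bool :=
  match rho with
  | e1 :: ((e2 :: _) as rest) => (tgt e1 == src e2) && consecutive rest
  | _ => true
  end.

Definition is_run (Q : finType) (A : automaton Q) (rho : seq (edge_t Q)) : Prop :=
  all (fun e => edge A (src e) (lbl e) (tgt e)) rho /\ consecutive rho.

(* Accepting: starts in q0 and ends in qf (the empty run, located at a single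
   state, is accepting iff q0 = qf). *)
Definition accepting (Q : finType) (A : automaton Q) (rho : seq (edge_t Q)) : Prop :=
  is_run A rho /\
  match rho with
  | [::] => q_init A = q_final A
  | e :: _ => src e = q_init A /\ tgt (last e rho) = q_final A
  end.

Definition production (q : nat) (Q : Type) (rho : seq (edge_t Q)) : BS :=
  foldl (bs_mul q) bs_one [seq letter_val (lbl e) | e <- rho].

Definition pos (q : nat) (Q : Type) (rho : seq (edge_t Q)) : int :=
  (production q rho).2.

Definition prefix_pos (q : nat) (Q : Type) (rho : seq (edge_t Q)) : seq int :=
  [seq pos q (take i rho) | i <- iota 0 (size rho).+1].

Definition pmax (q : nat) (Q : Type) (rho : seq (edge_t Q)) : int :=
  foldr Num.max (pos q (take 0 rho)) (prefix_pos q rho).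

Definition pmin (q : nat) (Q : Type) (rho : seq (edge_t Q)) : int :=
  foldr Num.min (pos q (take 0 rho)) (prefix_pos q rho).

Definition returning_left (q : nat) (Q : Type) (rho : seq (edge_t Q)) : Prop :=
  pos q rho = 0 /\ pmin q rho = 0.

Definition visits (q : nat) (Q : Type) (rho : seq (edge_t Q)) (z : int) : nat :=
  count (fun i => pos q (take i rho) == z) (iota 0 (size rho).+1).

Definition k_thin (q : nat) (k : nat) (Q : Type) (rho : seq (edge_t Q)) : Prop :=
  forall z : int, (visits q rho z <= k)%N.

Definition LeftRuns (q k : nat) (Q : finType) (A : automaton Q)
  (rho : seq (edge_t Q)) : Prop :=
  accepting A rho /\ k_thin q k rho /\ returning_left q rho.

(* Main.v *)
Require Import Defs.
From mathcomp Require Import all_boot all_order all_algebra.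
From mathcomp Require Import zify.
Import Order.TTheory GRing.Theory Num.Theory.
Local Open Scope ring_scope.

Lemma cnt_bound (s : seq int) (k N : nat) :
  (forall z : int, (count (pred1 z) s <= k)%N) ->
  (count (fun x : int => ((0 <= x) && (x < N%:Z))%R) s <= k * N)%N.
Proof.
move=> H; elim: N => [|N IH].
  rewrite muln0 (eq_count (a2:=pred0)) ?count_pred0 // => x /=.
  by apply/negP => /andP[a b]; lia.
have -> : count (fun x : int => (0 <= x) && (x < N.+1%:Z)) s =
   (count (fun x : int => ((0 <= x) && (x < N%:Z))%R) s + count (pred1 (N%:Z)) s)%N.
  elim: s {H IH} => //= x s ->.
  have [->|ne] := eqVneq x N%:Z.
    have -> : (0 <= N%:Z < N.+1%:Z)%R by apply/andP; split; lia.
    have -> : (0 <= N%:Z < N%:Z)%R = false by apply/negP => /andP[? ?]; lia.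
    rewrite /=; lia.
  have -> : (0 <= x < N.+1%:Z)%R = (0 <= x < N%:Z)%R.
    case: (boolP (0 <= x < N.+1%:Z)%R); case: (boolP (0 <= x < N%:Z)%R) => //= h1 h2.
    by exfalso; move: ne h1 h2; lia.
    by exfalso; move: h1 h2; lia.
  lia.
rewrite mulnS addnC; apply: leq_add => //.
Qed.

Lemma foldr_min_le (s : seq int) a y : y \in s -> foldr Num.min a s <= y.
Proof.
elim: s => //= x s IH; rewrite inE => /orP[/eqP ->|/IH h].
  by rewrite ge_min lexx.
by rewrite ge_min h orbT.
Qed.

Lemma foldr_max_ge (s : seq int) a y : y \in s -> y <= foldr Num.max a s.
Proof.
elim: s => //= x s IH; rewrite inE => /orP[/eqP ->|/IH h].
  by rewrite le_max lexx.
by rewrite le_max h orbT.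
Qed.

Lemma foldr_max_ge0 (s : seq int) a : a <= foldr Num.max a s.
Proof. elim: s => //= x s IH; by rewrite le_max IH orbT. Qed.

Theorem mainTheorem12 (q k : nat) (Q : finType) (A : automaton Q)
  (rho : seq (edge_t Q)) :
  (2 <= q)%N -> (1 <= k)%N -> LeftRuns q k A rho ->
  (size rho)%:R / k%:R < (pmax q rho + 1)%:~R :> rat.
Proof.
move=> _ hk [_ [hthin [_ hmin]]].
set M := pmax q rho.
have pos0 : pos q (take 0 rho) = 0 by rewrite take0.
have M0 : 0 <= M by rewrite /M /pmax pos0 foldr_max_ge0.
set s := prefix_pos q rho.
have hs : size s = (size rho).+1 by rewrite /s /prefix_pos size_map size_iota.
have Hall : forall x, x \in s -> (0 <= x) && (x < (`|M|%N.+1)%:Z).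
  move=> x xs; apply/andP; split.
    rewrite -hmin /pmin; exact: foldr_min_le.
  have : x <= M by exact: foldr_max_ge.
  rewrite -[M in _ <= M]gez0_abs //; lia.
have Hc : forall z, (count (pred1 z) s <= k)%N.
  move=> z; move: (hthin z); rewrite /visits /s /prefix_pos count_map.
  by [].
have := @cnt_bound s k (`|M|%N.+1) Hc.
rewrite (eq_in_count (a2:=predT) Hall) count_predT hs => hle.
have kpos : 0 < k%:R :> rat by rewrite ltr0n.
rewrite ltr_pdivrMr // -[M in (M + 1)%:~R]gez0_abs // -natz.
have -> : ((`|M|%:R + 1)%:~R * k%:R = ((`|M|.+1 * k)%N)%:R :> rat)%R.
  rewrite natrM -addn1 natrD; congr (_ * _). by rewrite rmorphD rmorph_nat.
by rewrite ltr_nat mulnC.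
Qed.
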